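(* Let $1\le m_1\le m$ be integers and let a set of $n$ jobs with processing times $p_1,\dots,p_n>0$ be given, all available at time $0$, to be processed non-preemptively on identical machines that always work at full rate. Then the minimum total completion time of the jobs on $m_1$ identical machines is at most $\left\lceil\frac{m}{m_1}\right\rceil$ times the minimum total completion time of the jobs on $m$ identical machines.
   Context: Each job is processed by exactly one machine without interruption, each machine processes one job at a time, and the total completion time is $\sum_j C_j$ where $C_j$ is the completion time of job $j$. *)

(* Defs.v *)
From mathcomp Require Import all_boot all_order all_algebra.
From mathcomp Require Import reals.
Set Implicit Arguments. Unset Strict Implicit. Unset Printing Implicit Defensive.
Import Order.TTheory GRing.Theory Num.Theory.
Local Open Scope ring_scope.

(* A non-preemptive schedule of n jobs (processing times p) on m identical
   machines: job j is run on machine [mach j] during [S j, S j + p j),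
   all jobs released at time 0, jobs on the same machine do not overlap. *)
Definition feasible (R : realType) (n m : nat) (p : 'I_n -> R)
  (mach : 'I_n -> 'I_m) (S : 'I_n -> R) : Prop :=
  (forall j, 0 <= S j) /\
  (forall j k, j != k -> mach j = mach k ->
     S j + p j <= S k \/ S k + p k <= S j).

Definition total_completion (R : realType) (n : nat) (p : 'I_n -> R)
  (S : 'I_n -> R) : R := \sum_(j < n) (S j + p j).

Definition is_min_tct (R : realType) (n m : nat) (p : 'I_n -> R) (c : R) : Prop :=
  (exists (mach : 'I_n -> 'I_m) (S : 'I_n -> R),
      feasible p mach S /\ total_completion p S = c) /\
  (forall (mach : 'I_n -> 'I_m) (S : 'I_n -> R),
      feasible p mach S -> c <= total_completion p S).

(* Main.v *)
Require Import Defs.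
From mathcomp Require Import all_boot all_order all_algebra.
From mathcomp Require Import reals.
From mathcomp Require Import zify lra.
Import Order.TTheory GRing.Theory Num.Theory.
Set Implicit Arguments. Unset Strict Implicit.
Local Open Scope ring_scope.

Section Aux.
Variables (R : realType) (n : nat) (p : 'I_n -> R).
Hypothesis p_pos : forall j, 0 < p j.

Lemma sub_sum (P Q : pred 'I_n) (f : 'I_n -> R) :
  (forall k, 0 <= f k) -> (forall k, P k -> Q k) ->
  \sum_(k | P k) f k <= \sum_(k | Q k) f k.
Proof.
move=> f0 PQ; rewrite [X in X <= _]big_mkcond [X in _ <= X]big_mkcond.
apply: ler_sum => k _; case: ifP => Pk; first by rewrite PQ.
by case: ifP.
Qed.

Definition ltk (key : 'I_n -> nat) (k j : 'I_n) : bool :=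
  (key k < key j)%N || ((key k == key j) && (k < j)%N).

Lemma ltk_irr key k : ltk key k k = false.
Proof. by rewrite /ltk ltnn eqxx ltnn. Qed.

Lemma ltk_trans key i j k : ltk key i j -> ltk key j k -> ltk key i k.
Proof.
rewrite /ltk => /orP[h1|/andP[/eqP e1 h1]] /orP[h2|/andP[/eqP e2 h2]];
  apply/orP.
- by left; apply: ltn_trans h1 h2.
- by left; rewrite -e2.
- by left; rewrite e1.
- by right; rewrite e1 e2 eqxx /=; apply: ltn_trans h1 h2.
Qed.

Lemma ltk_total key j k : j != k -> ltk key j k || ltk key k j.
Proof.
move=> njk; rewrite /ltk.
case: (ltngtP (key j) (key k)) => //= e.
idtac.
have : (val j != val k) by []. 
by case: (ltngtP (val j) (val k)).
Qed.

Definition compact m (mach : 'I_n -> 'I_m) (key : 'I_n -> nat) (j : 'I_n) : R :=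
  \sum_(k | (mach k == mach j) && ltk key k j) p k.

Lemma compact_feasible m mach key : feasible p mach (@compact m mach key).
Proof.
split.
  by move=> j; apply: sumr_ge0 => k _; apply: ltW.
have key_le : forall j k, j != k -> mach j = mach k -> ltk key j k ->
   compact mach key j + p j <= compact mach key k.
  move=> j k njk mjk ljk.
  rewrite /compact.
  have -> : compact mach key j + p j =
     \sum_(i | (mach i == mach j) && (ltk key i j || (i == j))) p i.
    rewrite (bigD1 j) /=; last by rewrite !eqxx orbT.
    rewrite addrC /compact; congr (_ + _); apply: eq_bigl => i.
    case: (i =P j) => [->|_]; first by rewrite ltk_irr eqxx.
    by rewrite orbF andbT.
  apply: sub_sum => [i|i]; first by apply: ltW.
  rewrite mjk => /andP[-> /orP[h|/eqP ->]] //=.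
  by apply: ltk_trans h ljk.
move=> j k njk mjk.
case/orP: (ltk_total key njk) => h.
  by left; apply: key_le.
by right; apply: key_le => //; rewrite eq_sym.
Qed.


Lemma busy_le m (mach : 'I_n -> 'I_m) S (i : 'I_m) N :
  feasible p mach S -> forall T, 0 <= T ->
  leq #|[pred k | (mach k == i) && (S k + p k <= T)]| N ->
  \sum_(k | (mach k == i) && (S k + p k <= T)) p k <= T.
Proof.
move=> [S0 Sdis]; elim: N => [|N IH] T T0 hc;
  (case: (pickP [pred k | (mach k == i) && (S k + p k <= T)]) => [k0 Pk0|none];
   last by rewrite big_pred0).
  have : leq 1 #|[pred k | (mach k == i) && (S k + p k <= T)]|.
    by apply/card_gt0P; exists k0.
  by rewrite lt0n; move: hc; rewrite leqn0 => ->.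
set P := [pred k | (mach k == i) && (S k + p k <= T)] in hc Pk0 *.
case: (@arg_maxP _ _ _ k0 P S Pk0) => ks Pks maxks.
rewrite (bigD1 ks) //=.
have Q_of : forall k, P k && (k != ks) -> (mach k == i) && (S k + p k <= S ks).
  move=> k /andP[Pk nk]; move: (Pk) => /andP[mk ck]; rewrite mk /=.
  have le : S k <= S ks := maxks k Pk.
  move: (Pks) => /andP[mks cks].
  case: (Sdis k ks nk); first by rewrite (eqP mk) (eqP mks).
    by [].
  move=> h; have := p_pos k; have := p_pos ks; lra.
set Q := [pred k | (mach k == i) && (S k + p k <= S ks)].
have cQ : (#|Q| <= N)%N.
  suff : (#|Q| < #|P|)%N by move=> h; rewrite -ltnS; apply: leq_trans h hc.
  apply: proper_card; apply/properP; split.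
    apply/subsetP => k; rewrite !inE => /andP[-> h] /=.
    move: (Pks); rewrite inE => /andP[_ h2]; have := p_pos ks; lra.
  exists ks => //; rewrite !inE negb_and; apply/orP; right.
  by rewrite -ltNge; have := p_pos ks; lra.
have := IH (S ks) (S0 ks) cQ.
have := sub_sum (fun k => ltW (p_pos k)) Q_of.
move: (Pks); rewrite inE => /andP[_ h2]; lra.
Qed.


Definition rk (f : 'I_n -> R) (j : 'I_n) : nat := #|[pred k | f k < f j]|.

Lemma rk_lt f j k : f j < f k -> (rk f j < rk f k)%N.
Proof.
move=> h; apply: proper_card; apply/properP; split.
  by apply/subsetP => i; rewrite !inE => h2; apply: lt_trans h2 h.
by exists j; rewrite !inE ?ltxx.
Qed.

Lemma rk_bound f j : (rk f j < n.+1)%N.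
Proof. by rewrite ltnS /rk; apply: leq_trans (max_card _) _; rewrite card_ord. Qed.

Lemma card_le_n (P : pred 'I_n) : leq #|P| n.
Proof. by apply: leq_trans (max_card _) _; rewrite card_ord. Qed.

Lemma compactD m (mach : 'I_n -> 'I_m) key j :
  compact mach key j + p j =
     \sum_(i | (mach i == mach j) && (ltk key i j || (i == j))) p i.
Proof.
rewrite (bigD1 j) /=; last by rewrite !eqxx orbT.
rewrite addrC /compact; congr (_ + _); apply: eq_bigl => i.
case: (i =P j) => [->|_]; first by rewrite ltk_irr eqxx.
by rewrite orbF andbT.
Qed.

Lemma ltk_le key k j : ltk key k j -> (key k <= key j)%N.
Proof. by rewrite /ltk => /orP[/ltnW|/andP[/eqP -> _]]. Qed.

Lemma compact_le m (mach : 'I_n -> 'I_m) S key : feasible p mach S ->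
  (forall j k, S j < S k -> (key j < key k)%N) ->
  forall j, compact mach key j <= S j.
Proof.
move=> fS hk j; case: (fS) => S0 Sdis.
apply: le_trans (busy_le (i := mach j) (N := n) fS (S0 j) (card_le_n _)).
apply: sub_sum => [k|k]; first by apply: ltW.
move=> /andP[mk lk]; rewrite mk /=.
have nkj : k != j by apply/eqP => e; move: lk; rewrite e ltk_irr.
have le : S k <= S j.
  rewrite leNgt; apply/negP => /hk h; have := ltk_le lk; rewrite leqNgt h //.
case: (Sdis k j nkj (eqP mk)) => // h.
have := p_pos j; lra.
Qed.

End Aux.

Lemma min_exists (R : realType) (n m : nat) (p : 'I_n -> R) :
  (forall j, 0 < p j) -> (0 < m)%N -> exists c, is_min_tct m p c.
Proof.
move=> p_pos m_gt0.
pose T := ({ffun 'I_n -> 'I_m} * {ffun 'I_n -> 'I_n.+1})%type.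
pose F (x : T) := total_completion p (compact p x.1 (fun j => val (x.2 j))).
pose x0 : T := ([ffun => Ordinal m_gt0], [ffun => ord0]).
case: (@arg_minP _ _ T x0 xpredT F isT) => xs _ minxs.
exists (F xs); split.
  exists xs.1, (compact p xs.1 (fun j => val (xs.2 j))); split => //.
  exact: compact_feasible.
move=> mach S fS.
pose x : T := ([ffun j => mach j], [ffun j => inord (rk S j)]).
apply: le_trans (minxs x isT) _.
rewrite /F /total_completion; apply: ler_sum => j _; rewrite lerD2r.
have -> : compact p x.1 (fun j => val (x.2 j)) j = compact p mach (fun j => val (x.2 j)) j.
  by rewrite /compact; apply: eq_bigl => k; rewrite /= !ffunE.
apply: (compact_le p_pos fS) => a b h.
by rewrite /= !ffunE !inordK ?rk_bound //; apply: rk_lt.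
Qed.

Lemma merged (R : realType) (n m1 m : nat) (p : 'I_n -> R)
  (mach : 'I_n -> 'I_m) (S : 'I_n -> R) :
  (forall j, 0 < p j) -> (0 < m1)%N -> feasible p mach S ->
  exists (mach1 : 'I_n -> 'I_m1) S1, feasible p mach1 S1 /\
    total_completion p S1 <= ((m.-1 %/ m1).+1)%:R * total_completion p S.
Proof.
move=> p_pos m1_gt0 fS; case: (fS) => S0 Sdis.
set N := (m.-1 %/ m1)%N.+1.
pose mach1 j : 'I_m1 := Ordinal (ltn_pmod (mach j) m1_gt0).
pose C j := S j + p j.
exists mach1, (compact p mach1 (rk C)); split; first exact: compact_feasible.
rewrite /total_completion mulr_sumr; apply: ler_sum => j _.
rewrite compactD.
have m1E : forall k, (mach1 k == mach1 j) = (mach k %% m1 == mach j %% m1)%N.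
  by move=> k.
apply: (@le_trans _ _ (\sum_(k | (mach1 k == mach1 j) && (C k <= C j)) p k)).
  apply: sub_sum => [k|k]; first by apply: ltW.
  move=> /andP[-> /orP[lk|/eqP ->]] //=.
  rewrite leNgt; apply/negP => /rk_lt h; have := ltk_le lk; rewrite leqNgt h //.
rewrite (partition_big mach (fun i : 'I_m => (i %% m1 == mach j %% m1)%N)); last first.
  by move=> k /andP[]; rewrite m1E.
apply: (@le_trans _ _ (\sum_(i : 'I_m | (i %% m1 == mach j %% m1)%N) C j)).
  apply: ler_sum => i _.
  apply: le_trans (busy_le (i := i) (N := n) p_pos fS _ (card_le_n _)); last first.
    by rewrite /C; apply: addr_ge0 => //; apply: ltW.
  apply: sub_sum => [k|k]; first by apply: ltW.
  by move=> /andP[/andP[_ h] ->].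
rewrite sumr_const -[C j *+ _]mulr_natl; apply: ler_wpM2r.
  by rewrite /C; apply: addr_ge0 => //; apply: ltW.
rewrite ler_nat.
have fP : forall i : 'I_m, (i %/ m1 < N)%N.
  move=> i; rewrite ltnS leq_div2r //.
  by have h := ltn_ord i; rewrite -ltnS; apply: leq_trans h _; apply: leqSpred.
pose f (i : 'I_m) : 'I_N := Ordinal (fP i).
have := @leq_card_in _ _ f [pred i : 'I_m | (i %% m1 == mach j %% m1)%N].
rewrite card_ord; apply => a b; rewrite !inE => /eqP ha /eqP hb [e].
apply: val_inj => /=.
by rewrite (divn_eq a m1) (divn_eq b m1) e ha hb.
Qed.

Theorem claim2 (R : realType) (n m1 m : nat) (p : 'I_n -> R) :
  (forall j, 0 < p j) -> (1 <= m1)%N -> (m1 <= m)%N ->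
  exists c1 c : R,
    is_min_tct m1 p c1 /\ is_min_tct m p c /\
    c1 <= (Num.ceil (m%:R / m1%:R : R))%:~R * c.
Proof.
move=> p_pos m1_gt0 m1m.
have m_gt0 : (0 < m)%N by apply: leq_trans m1m.
case: (min_exists p_pos m1_gt0) => c1 H1.
case: (min_exists p_pos m_gt0) => c H.
have [_ min1] := H1.
have [[mach [S [fS eS]]] minc] := H.
exists c1, c; split; first by [].
split; first by [].
case: (merged p_pos m1_gt0 fS) => mach1 [S1 [fS1 le1]].
apply: le_trans (min1 _ _ fS1) _.
apply: le_trans le1 _; rewrite eS.
have c0 : 0 <= c.
  rewrite -eS /total_completion; apply: sumr_ge0 => j _.
  by case: fS => S0 _; apply: addr_ge0 => //; apply: ltW.
apply: ler_wpM2r => //.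
set N := (m.-1 %/ m1)%N.
have hx : (N%:R : R) < m%:R / m1%:R.
  have m1R : (0 : R) < m1%:R by rewrite ltr0n.
  rewrite ltr_pdivlMr // -natrM ltr_nat.
  apply: (@leq_ltn_trans m.-1); first by rewrite leq_divM.
  by rewrite prednK.
have h : (N%:Z < Num.ceil (m%:R / m1%:R : R))%R.
  by rewrite -(ltr_int R); exact: lt_le_trans hx (ceil_ge _).
rewrite -[N.+1%:R]/((N.+1)%:Z%:~R : R) ler_int.
by rewrite -addn1 PoszD lezD1.
Qed.
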